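(* Let $\phi:[0,1]\to[0,1]$ be a nondecreasing continuous function such that $\phi(x)>x$ for all $x\in(0,1)$, and let $V_\phi$ be the operator on $L_2[0,1]$ given by $(V_\phi f)(x)=\int_0^{\phi(x)}f(t)\,dt$. Then $V_\phi$ has no negative real eigenvalues, i.e. $\sigma_p(V_\phi)\cap(-\infty,0)=\emptyset$.
   Context: $\sigma_p(V_\phi)$ denotes the point spectrum of $V_\phi$. *)

(* Defs.v *)
From HB Require Import structures.
From mathcomp Require Import all_boot all_order all_algebra.
From mathcomp Require Import all_classical all_reals all_analysis.
Set Implicit Arguments. Unset Strict Implicit. Unset Printing Implicit Defensive.
Import Order.TTheory GRing.Theory Num.Theory.
Import numFieldNormedType.Exports.
Local Open Scope classical_set_scope.
Local Open Scope ring_scope.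

Definition L2fun (R : realType) (u : R -> R) : Prop :=
  measurable_fun (`[0%R, 1%R] : set R) u /\
  (\int[@lebesgue_measure R]_(x in `[0%R, 1%R]) ((u x) ^+ 2)%:E < +oo)%E.

Definition Vphi (R : realType) (phi : R -> R) (u : R -> R) (x : R) : R :=
  Rintegral (@lebesgue_measure R) `[0%R, phi x] u.

(* A complex number a + i b is
   encoded as the pair (a, b); a complex function f = u + i v is encoded by
   its real part u and imaginary part v.  V_phi f = (a + i b) f a.e. on [0,1]
   means V_phi u = a u - b v and V_phi v = a v + b u a.e. on [0,1]. *)
Definition point_spectrum (R : realType) (phi : R -> R) : set (R * R) :=
  [set z | exists u v : R -> R,
     [/\ L2fun u, L2fun v,
      ~ {ae @lebesgue_measure R, forall x, 0 <= x <= 1 -> u x = 0 /\ v x = 0} &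
      {ae @lebesgue_measure R, forall x, 0 <= x <= 1 ->
          Vphi phi u x = z.1 * u x - z.2 * v x /\
          Vphi phi v x = z.1 * v x + z.2 * u x}]].

(* Main.v *)
Require Import Defs.
From HB Require Import structures.
From mathcomp Require Import all_boot all_order all_algebra.
From mathcomp Require Import all_classical all_reals all_analysis.
From mathcomp Require Import measurable_realfun.
From mathcomp Require Import ring lra.
Import Order.TTheory GRing.Theory Num.Theory.
Import numFieldNormedType.Exports.
Local Open Scope classical_set_scope.
Local Open Scope ring_scope.

Section Aux.
Variable R : realType.
Local Notation mu := (@lebesgue_measure R).
Local Notation I01 := (`[0%R, 1%R]%classic : set R).

Lemma int_ae_le (D : set R) (f : R -> R) (M : R) :
  measurable D -> (mu D < +oo)%E -> mu.-integrable D (EFin \o f) -> 0 <= M ->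
  {ae mu, forall x, D x -> f x <= M} ->
  Rintegral mu D f <= M * fine (mu D).
Proof.
move=> mD Dfin fi M0 hae.
have mf := measurable_int _ fi.
rewrite -lee_fin /Rintegral fineK; last exact: integrable_fin_num.
have muD : mu D \is a fin_num by rewrite ge0_fin_numE.
rewrite EFinM fineK //.
rewrite integralE.
apply: (@le_trans _ _ (\int[mu]_(x in D) ((EFin \o f)^\+ x))%E).
  rewrite leeBlDr; last first.
    rewrite ge0_fin_numE; last exact: integral_ge0.
    exact: integral_funeneg_lt_pinfty.
  by rewrite leeDl // integral_ge0.
have -> : (M%:E * mu D = \int[mu]_(x in D) (cst M%:E) x)%E by rewrite integral_cst.
apply: ae_ge0_le_integral => //.
all: try (move=> x _; exact: funepos_ge0).
  exact: measurable_funepos.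
apply: (filterS (F := almost_everywhere mu) _ hae) => x h Dx.
rewrite funeposE /= ge_max !lee_fin M0 andbT; exact: h.
Qed.

Lemma mu_itv_cc (a b : R) : a <= b -> mu (`[a, b]%classic : set R) = (b - a)%:E.
Proof.
move=> ab; rewrite lebesgue_measure_itv /= lte_fin.
by case: ltgtP ab => // ->; rewrite subrr.
Qed.

Lemma mu_itv_oc (a b : R) : a <= b -> mu (`]a, b]%classic : set R) = (b - a)%:E.
Proof.
move=> ab; rewrite lebesgue_measure_itv /= lte_fin.
by case: ltgtP ab => // ->; rewrite subrr.
Qed.

Lemma mu01 : mu I01 = 1%:E.
Proof. by rewrite mu_itv_cc ?ler01 // subr0. Qed.

Lemma L2_int (u : R -> R) : L2fun u -> mu.-integrable I01 (EFin \o u).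
Proof.
move=> [mu_ hu2].
have m01 : measurable (I01 : set R) by [].
apply/integrableP; split; first exact/measurable_EFinP.
apply: (@le_lt_trans _ _ (\int[mu]_(x in I01) ((cst 1%:E) x + ((u x) ^+ 2)%:E))%E).
  apply: ge0_le_integral => //.
  - apply: measurableT_comp => //; exact/measurable_EFinP.
  - apply/measurable_EFinP => /=.
    apply: measurable_funD => //; apply: measurable_funX; exact: mu_.
  - move=> x _ /=; rewrite -EFinD lee_fin.
    have h : `|u x| ^+ 2 = u x ^+ 2 by rewrite real_normK // num_real.
    rewrite -h; set a := `|u x|; have a0 : 0 <= a by exact: normr_ge0.
    nra.
rewrite ge0_integralD //.
- rewrite integral_cst // [X in (1 * X)%E](_ : _ = 1%:E); last exact: mu01. rewrite mul1e.
  by apply: lte_add_pinfty => //; rewrite ltry.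
- by move=> x _ /=; rewrite lee_fin sqr_ge0.
- apply/measurable_EFinP; apply: measurable_funX; exact: mu_.
Qed.

Lemma subI01 (a b : R) : 0 <= a -> b <= 1 -> (`[a, b]%classic : set R) `<=` I01.
Proof.
move=> a0 b1 x /=; rewrite !in_itv /= => /andP[h1 h2].
apply/andP; split; [exact: le_trans h1|exact: le_trans b1].
Qed.

Lemma subI01o (a b : R) : 0 <= a -> b <= 1 -> (`]a, b]%classic : set R) `<=` I01.
Proof.
move=> a0 b1 x /=; rewrite !in_itv /= => /andP[h1 h2].
apply/andP; split; [exact: (le_trans a0 (ltW h1))|exact: le_trans b1].
Qed.

Lemma pow2_lim (k A : R) : 0 <= A -> (forall n : nat, k <= A / 2 ^+ n) -> k <= 0.
Proof.
move=> A0 h; rewrite leNgt; apply/negP => k0.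
have Ak0 : 0 <= A / k by rewrite divr_ge0 // ltW.
have := archi_boundP Ak0; set n := Num.Def.archi_bound _ => hn.
have h2 : (n%:R : R) <= 2 ^+ n.
  rewrite -natrX ler_nat; apply: ltnW; exact: ltn_expl.
have := h n; rewrite ler_pdivlMr ?exprn_gt0 // => h3.
have : A < k * 2 ^+ n.
  apply: lt_le_trans (_ : k * n%:R <= _); last by rewrite ler_pM2l.
  by rewrite -ltr_pdivrMl // mulrC.
by rewrite ltNge h3.
Qed.

End Aux.
Arguments int_ae_le {R}.
Arguments mu_itv_cc {R}.
Arguments mu_itv_oc {R}.
Arguments L2_int {R}.
Arguments subI01 {R}.
Arguments subI01o {R}.
Arguments pow2_lim {R}.

Definition Fu (R : realType) (u : R -> R) (y : R) : R :=
  Rintegral (@lebesgue_measure R) (`[0%R, y]%classic : set R) u.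

Arguments Fu {R}.

Section Core.
Variables (R : realType) (phi : R -> R).
Local Notation mu := (@lebesgue_measure R).
Local Notation I01 := (`[0%R, 1%R]%classic : set R).
Hypothesis hphi : forall x : R, 0 <= x <= 1 -> x <= phi x <= 1.
Variables (u : R -> R) (m : R).
Hypothesis ui : mu.-integrable I01 (EFin \o u).
Hypothesis m0 : m < 0.
Hypothesis hae : {ae mu, forall x, 0 <= x <= 1 -> u x = m * Fu u (phi x)}.
Hypothesis hF1 : 0 <= Fu u 1.

Let K z := Fu u 1 - Fu u z.
Let A := Rintegral mu I01 (fun x => `|u x|).
Let delta := - (2 * m)^-1.

Lemma A_ge0 : 0 <= A.
Proof. by apply: Rintegral_ge0 => x _; exact: normr_ge0. Qed.

Lemma delta_gt0 : 0 < delta.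
Proof. by rewrite /delta oppr_gt0 invr_lt0 pmulr_rlt0. Qed.

Lemma mdelta : - m * delta = 1 / 2.
Proof.
have mn : m != 0 by rewrite ltr0_neq0.
by rewrite /delta; field. Qed.

Lemma splitF (x t : R) : 0 <= x -> x <= t -> t <= 1 ->
  Fu u t = Fu u x + Rintegral mu (`]x, t]%classic : set R) u.
Proof.
move=> x0 xt t1.
have it : mu.-integrable (`[0%R, t]%classic : set R) (EFin \o u).
  apply: integrableS ui => //; exact: subI01.
have := @Rintegral_itvB R u (BLeft 0) (BRight t) x it.
rewrite !bnd_simp => /(_ x0 xt) <-.
by rewrite /Fu addrC subrK.
Qed.

Lemma boundA (x t : R) : 0 <= x -> x <= t -> t <= 1 ->
  Rintegral mu (`]x, t]%classic : set R) u <= A.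
Proof.
move=> x0 xt t1.
have sub := subI01o _ _ x0 t1.
have it : mu.-integrable (`]x, t]%classic : set R) (EFin \o u).
  by apply: integrableS ui.
apply: le_trans (ler_norm _) _.
apply: le_trans (le_normr_Rintegral _ it) _ => //.
rewrite /A /Rintegral; apply: fine_le.
- apply: integrable_fin_num => //; exact: (integrable_norm it).
- apply: integrable_fin_num => //; exact: (integrable_norm ui).
apply: ge0_subset_integral => //.
- apply/measurable_EFinP; apply: measurableT_comp => //.
  by have := measurable_int _ ui => /measurable_EFinP.
Qed.


Lemma stepC (t y : R) : 0 <= y -> y <= t -> t <= 1 -> t - y <= delta ->
  (forall z, t <= z <= 1 -> K z <= 0) ->
  forall n : nat, forall z, y <= z <= 1 -> K z <= A / 2 ^+ n.
Proof.
move=> y0 yt t1 tyd hK n.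
have A0 := A_ge0.
elim: n => [|n IH] z /andP[yz z1].
- have [tz|zt] := leP t z.
    apply: le_trans (hK z _) _; first by rewrite tz z1.
    by rewrite expr0 divr1.
  have z0 : 0 <= z by exact: le_trans yz.
  have -> : K z = K t + Rintegral mu (`]z, t]%classic : set R) u.
    rewrite /K (splitF z t z0 (ltW zt) t1); ring.
  rewrite expr0 divr1.
  have := hK t; rewrite lexx t1 => /(_ isT) Kt.
  have := boundA z t z0 (ltW zt) t1; lra.
- have [tz|zt] := leP t z.
    apply: le_trans (hK z _) _; first by rewrite tz z1.
    by rewrite divr_ge0 // exprn_ge0.
  have z0 : 0 <= z by exact: le_trans yz.
  have -> : K z = K t + Rintegral mu (`]z, t]%classic : set R) u.
    rewrite /K (splitF z t z0 (ltW zt) t1); ring.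
  have := hK t; rewrite lexx t1 => /(_ isT) Kt.
  set N := A / 2 ^+ n.
  have N0 : 0 <= N by rewrite divr_ge0 // exprn_ge0.
  have sub := subI01o _ _ z0 t1.
  have it : mu.-integrable (`]z, t]%classic : set R) (EFin \o u).
    by apply: integrableS ui.
  have hN0 : 0 <= - m * N by rewrite mulr_ge0 // oppr_ge0 ltW.
  have muf : (mu (`]z, t]%classic : set R) < +oo)%E.
    by rewrite mu_itv_oc ?(ltW zt) // ltry.
  have hb2 := int_ae_le _ _ (- m * N) (measurable_itv _) muf it hN0.
  rewrite mu_itv_oc ?(ltW zt) //= in hb2.
  have hae2 : {ae mu, forall x, (`]z, t]%classic : set R) x -> u x <= - m * N}.
    apply: (filterS (F := almost_everywhere mu) _ hae) => s hs.
    rewrite /= in_itv /= => /andP[zs st].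
    have s01 : 0 <= s <= 1.
      by apply/andP; split; [exact: le_trans z0 (ltW zs)|exact: le_trans st t1].
    rewrite (hs s01).
    have /andP[ps p1] := hphi _ s01.
    have := IH (phi s); rewrite p1 andbT => /(_ (le_trans yz (le_trans (ltW zs) ps))).
    rewrite /K /= -/N => hKp.
    have h1 : 0 <= Fu u (phi s) + N.
      apply: le_trans hF1 _; rewrite addrC -lerBlDr; exact: hKp.
    have : m * (Fu u (phi s) + N) <= 0 by rewrite mulr_le0_ge0 // ltW.
    rewrite mulrDr; lra.
  have := hb2 hae2 => hI.
  have e : A / 2 ^+ n.+1 = N / 2 by rewrite exprS /N; field.
  rewrite e.
  have htz : t - z <= delta by lra.
  have h2 : - m * N * (t - z) <= - m * N * delta by rewrite ler_wpM2l.
  have h3 : - m * N * delta = N / 2 by rewrite mulrAC mdelta mul1r mulrC.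
  lra.
Qed.


Lemma outer (n : nat) : forall y, 0 <= y <= 1 -> 1 - n%:R * delta <= y -> K y <= 0.
Proof.
have d0 := delta_gt0.
elim: n => [|n IH] y /andP[y0 y1] hy.
  rewrite mul0r subr0 in hy.
  have -> : y = 1 by apply/eqP; rewrite eq_le y1 hy.
  by rewrite /K subrr.
have [h|h] := leP (1 - n%:R * delta) y.
  by apply: IH => //; rewrite y0 y1.
set t := 1 - n%:R * delta in h.
have nd0 : 0 <= n%:R * delta by rewrite mulr_ge0 // ltW.
have t1 : t <= 1 by rewrite /t; lra.
have tyd : t - y <= delta.
  rewrite -natr1 in hy; rewrite /t; lra.
have hK : forall z, t <= z <= 1 -> K z <= 0.
  move=> z /andP[tz z1]; apply: IH => //.
  by rewrite z1 andbT; apply: le_trans y0 (le_trans (ltW h) tz).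
apply: (pow2_lim _ _ A_ge0) => k.
apply: (stepC t y y0 (ltW h) t1 tyd hK k).
by rewrite lexx y1.
Qed.

Lemma core_main x : 0 <= x <= 1 -> Fu u 1 <= Fu u x.
Proof.
move=> /andP[x0 x1].
have d0 := delta_gt0.
have di0 : 0 <= delta^-1 by rewrite invr_ge0 ltW.
have := archi_boundP di0; set n := Num.Def.archi_bound _ => hn.
have : K x <= 0.
  apply: (outer n); first by rewrite x0 x1.
  have : 1 < n%:R * delta by rewrite -ltr_pdivrMr // div1r.
  lra.
rewrite /K; lra.
Qed.

End Core.

Section Main.
Variables (R : realType) (phi : R -> R).
Local Notation mu := (@lebesgue_measure R).
Local Notation I01 := (`[0%R, 1%R]%classic : set R).
Hypothesis hphi : forall x : R, 0 <= x <= 1 -> x <= phi x <= 1.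

Lemma Fu0 (u : R -> R) : Fu u 0 = 0.
Proof. by rewrite /Fu set_itv1 Rintegral_set1. Qed.

Lemma scaled (u : R -> R) (m : R) :
  mu.-integrable I01 (EFin \o u) -> m < 0 ->
  {ae mu, forall x, 0 <= x <= 1 -> u x = m * Fu u (phi x)} ->
  forall c, 0 <= c * Fu u 1 -> forall x, 0 <= x <= 1 -> c * Fu u 1 <= c * Fu u x.
Proof.
move=> ui m0 hae c hc.
set w := fun x => c * u x.
have wi : mu.-integrable I01 (EFin \o w).
  have h : mu.-integrable I01 (fun x => (c%:E * (EFin \o u) x)%E).
    by apply: integrableZl.
  apply: eq_integrable h => //.
have Fw : forall y, 0 <= y <= 1 -> Fu w y = c * Fu u y.
  move=> y /andP[y0 y1]; rewrite /Fu /w RintegralZl //.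
  apply: integrableS ui => //; exact: subI01.
have haew : {ae mu, forall x, 0 <= x <= 1 -> w x = m * Fu w (phi x)}.
  apply: (filterS (F := almost_everywhere mu) _ hae) => x hx x01.
  have /andP[px p1] := hphi _ x01.
  have p01 : 0 <= phi x <= 1.
    by case/andP: x01 => x0 _; rewrite p1 (le_trans x0 px).
  by rewrite Fw // /w (hx x01) mulrCA.
have hw1 : 0 <= Fu w 1 by rewrite Fw // ler01 lexx.
move=> x x01.
rewrite -!Fw //; last by rewrite ler01 lexx.
exact: (core_main _ _ hphi _ _ wi m0 haew hw1 x x01).
Qed.

Lemma eigen_zero (u : R -> R) (lam : R) :
  mu.-integrable I01 (EFin \o u) -> lam < 0 ->
  {ae mu, forall x, 0 <= x <= 1 -> Vphi phi u x = lam * u x} ->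
  {ae mu, forall x, 0 <= x <= 1 -> u x = 0}.
Proof.
move=> ui l0 hae.
have m0 : lam^-1 < 0 by rewrite invr_lt0.
have hae2 : {ae mu, forall x, 0 <= x <= 1 -> u x = lam^-1 * Fu u (phi x)}.
  apply: (filterS (F := almost_everywhere mu) _ hae) => x hx x01.
  have e : Fu u (phi x) = lam * u x by exact: hx x01.
  rewrite e.
  by rewrite mulrA mulVf ?mul1r // ltr0_neq0.
have sc := scaled _ _ ui m0 hae2.
have F1 : Fu u 1 = 0.
  have := sc (Fu u 1) _ 0; rewrite Fu0 mulr0 lexx ler01 => /(_ _ isT).
  have h := sqr_ge0 (Fu u 1); rewrite expr2 in h.
  move=> /(_ h) h2.
  by apply/eqP; rewrite -sqrf_eq0 expr2 eq_le h2 h.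
have Fx : forall x, 0 <= x <= 1 -> Fu u x = 0.
  move=> x x01.
  have := sc 1 _ x x01; rewrite F1 mulr0 lexx mul1r => /(_ isT) h1.
  have := sc (-1) _ x x01; rewrite F1 mulr0 lexx => /(_ isT) h2.
  lra.
apply: (filterS (F := almost_everywhere mu) _ hae2) => x hx x01.
have /andP[px p1] := hphi _ x01.
have p01 : 0 <= phi x <= 1.
  by case/andP: x01 => x0 _; rewrite p1 (le_trans x0 px).
by rewrite (hx x01) Fx // mulr0.
Qed.

End Main.

Theorem proposition4p1 (R : realType) (phi : R -> R)
  (phi_cont : {within `[0%R, 1%R], continuous phi})
  (phi_range : forall x : R, 0 <= x <= 1 -> 0 <= phi x <= 1)
  (phi_mono : forall x y : R, 0 <= x -> x <= y -> y <= 1 -> phi x <= phi y)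
  (phi_gt : forall x : R, 0 < x < 1 -> x < phi x) :
  point_spectrum phi `&` [set z : R * R | z.2 = 0 /\ z.1 < 0] = set0.
Proof.
have hphi : forall x : R, 0 <= x <= 1 -> x <= phi x <= 1.
  move=> x x01; have /andP[p0 p1] := phi_range x x01.
  rewrite p1 andbT; case/andP: x01 => x0 x1.
  have [xe|xn0] := eqVneq x 0; first by move: p0; rewrite xe.
  have [xe1|xn1] := eqVneq x 1; last first.
    apply: ltW; apply: phi_gt.
    by rewrite lt_neqAle eq_sym xn0 x0 lt_neqAle xn1 x1.
  rewrite xe1 in p0 p1 *.
  rewrite leNgt; apply/negP => hlt.
  set w := (phi 1 + 1) / 2.
  have w0 : 0 < w by rewrite /w; lra.
  have w1 : w < 1 by rewrite /w; lra.
  have := phi_gt w; rewrite w0 w1 => /(_ isT) hw.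
  have := phi_mono w 1 (ltW w0) (ltW w1) (lexx _) => hm.
  have : phi 1 < w by rewrite /w; lra.
  lra.
rewrite -subset0 => z [[u [v [Lu Lv Hnz Hae]]] [z2 z1]].
apply: Hnz.
have Hu : {ae @lebesgue_measure R, forall x, 0 <= x <= 1 -> Vphi phi u x = z.1 * u x}.
  apply: (filterS (F := almost_everywhere (@lebesgue_measure R)) _ Hae) => x hx x01.
  by have [-> _] := hx x01; rewrite z2 mul0r subr0.
have Hv : {ae @lebesgue_measure R, forall x, 0 <= x <= 1 -> Vphi phi v x = z.1 * v x}.
  apply: (filterS (F := almost_everywhere (@lebesgue_measure R)) _ Hae) => x hx x01.
  by have [_ ->] := hx x01; rewrite z2 mul0r addr0.
have Zu := eigen_zero _ _ hphi _ _ (L2_int _ Lu) z1 Hu.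
have Zv := eigen_zero _ _ hphi _ _ (L2_int _ Lv) z1 Hv.
apply: (filterS2 (ae_filter_ringOfSetsType _) _ Zu Zv).
by move=> x h1 h2 x01; split; [exact: h1|exact: h2].
Qed.
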